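(* Let $G$ be a connected (finite, simple) graph, $\mathcal{F}$ a maximum induced forest of $G$, $S=V(G)\setminus V(\mathcal{F})$, $H$ the contracted graph, and $B$ a skeleton of $H$ with the maximum possible number of 2-edges among all skeletons (all as defined in the context). Let $L_S$ be the set of vertices of $S$ that are leaves of $B$ and let $B_1=B[V(B)\setminus L_S]$ (the inner skeleton). Then every leaf of $B_1$ is a tree vertex.
   Context: A maximum induced forest of $G$ is an induced forest of $G$ with the maximum number of vertices. Let $\mathcal{T}$ be the set of connected components (trees) of $\mathcal{F}$ and $S=V(G)\setminus V(\mathcal{F})$. The graph $H$ has vertex set $\{x_T : T\in\mathcal{T}\}\cup S$ (the $x_T$ are called tree vertices, the vertices of $S$ non-tree vertices) and edge set consisting of all edges of $G[S]$ together with all pairs $ux_T$ with $u\in S$, $T\in\mathcal{T}$ such that $u$ has at least one neighbor in $V(T)$ in $G$. An edge $ux_T$ of $H$ is a 2-edge if $u$ has at least two neighbors in $V(T)$ in $G$; all other edges of $H$ (including all edges with both endpoints in $S$) are 1-edges. A skeleton is a spanning tree of $H$ rooted at some tree vertex, with all edges directed towards the root (an in-arborescence). A leaf is a vertex of total degree 1. *)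

(* Defs.v *)
From mathcomp Require Import all_boot.
Set Implicit Arguments. Unset Strict Implicit. Unset Printing Implicit Defensive.

(* A finite simple graph: vertex type T : finType, adjacency e : rel T,
   assumed symmetric and irreflexive (hypotheses of the theorem). *)
Section Graph.
Variables (T : finType) (e : rel T).

Definition graph_connected : Prop := forall x y : T, connect e x y.

Definition has_cycle_in (F : {set T}) : Prop :=
  exists s : seq T, [/\ uniq s, 3 <= size s, all (fun x => x \in F) s & cycle e s].

Definition induced_forest (F : {set T}) : Prop := ~ has_cycle_in F.

Definition max_induced_forest (F : {set T}) : Prop :=
  induced_forest F /\ forall F' : {set T}, induced_forest F' -> #|F'| <= #|F|.

Definition erestr (F : {set T}) : rel T :=
  [rel x y | [&& e x y, x \in F & y \in F]].

Definition comp (F : {set T}) (v : T) : {set T} :=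
  [set w in F | connect (erestr F) v w].

(* the trees of the forest, as vertex sets; these are the tree vertices x_T *)
Definition trees (F : {set T}) : {set {set T}} := [set comp F v | v in F].

(* non-tree vertices u in S = V(G) \ F, represented as singletons [set u] *)
Definition nontree (F : {set T}) : {set {set T}} := [set [set u] | u in ~: F].

Definition HV (F : {set T}) : {set {set T}} := trees F :|: nontree F.

Definition ut_edge (F : {set T}) (k : nat) (X Y : {set T}) : bool :=
  [exists u, [&& u \notin F, X == [set u], Y \in trees F &
                 k <= #|[set w in Y | e u w]| ]].

Definition Hadj (F : {set T}) (X Y : {set T}) : bool :=
  [|| [exists u, exists v, [&& u \notin F, v \notin F, X == [set u],
                               Y == [set v] & e u v]],
      ut_edge F 1 X Y | ut_edge F 1 Y X].

Definition two_edge (F : {set T}) (X Y : {set T}) : bool :=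
  ut_edge F 2 X Y || ut_edge F 2 Y X.

(* B is a skeleton of H rooted at r: a spanning in-arborescence of H
   (given as a set of arcs (child, parent)) rooted at the tree vertex r. *)
Definition skeleton (F : {set T}) (B : {set {set T} * {set T}}) (r : {set T})
  : Prop :=
  [/\ r \in trees F,
      forall a, a \in B -> [/\ a.1 \in HV F, a.2 \in HV F & Hadj F a.1 a.2],
      forall X, X \in HV F -> X != r ->
         #|[set a in B | a.1 == X]| = 1,
      #|[set a in B | a.1 == r]| = 0 &
      forall X, X \in HV F -> connect [rel P Q | (P, Q) \in B] X r].

Definition num_two_edges (F : {set T}) (B : {set {set T} * {set T}}) : nat :=
  #|[set a in B | two_edge F a.1 a.2]|.

Definition deg_in (B : {set {set T} * {set T}}) (W : {set {set T}})
  (X : {set T}) : nat :=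
  #|[set a in B | [&& (a.1 == X) || (a.2 == X), a.1 \in W & a.2 \in W]]|.

Definition LS (F : {set T}) (B : {set {set T} * {set T}}) : {set {set T}} :=
  [set X in nontree F | deg_in B (HV F) X == 1].

End Graph.

(* Main.v *)
Require Import Defs.
From mathcomp Require Import all_boot.
From Stdlib Require Import Classical.
Set Implicit Arguments. Unset Strict Implicit.

Lemma path_restr (T : finType) (e : rel T) (F : {set T}) x p :
  x \in F -> all (fun y => y \in F) p -> path e x p -> path (erestr e F) x p.
Proof.
elim: p x => [//|y p IH] x xF /= /andP[yF aF] /andP[exy pp].
by rewrite /= /erestr /= exy xF yF /= IH.
Qed.

Lemma nontree_not_tree (T : finType) (e : rel T) (F : {set T}) X :
  X \in nontree F -> X \notin trees e F.
Proof.
case/imsetP=> u; rewrite inE => uF ->; apply/negP => /imsetP[v vF].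
move/setP/(_ v); rewrite !inE vF connect0 /= => /eqP ev.
by rewrite -ev vF in uF.
Qed.

Lemma two_nb (T : finType) (e : rel T) (e_sym : symmetric e)
  (F : {set T}) (HF : max_induced_forest e F) w :
  w \notin F -> exists2 Tt, Tt \in trees e F & ut_edge e F 2 [set w] Tt.
Proof.
move=> wF.
have : has_cycle_in e (w |: F).
  apply: NNPP => Hn.
  have := HF.2 (w |: F) Hn; by rewrite cardsU1 wF ltnn.
case=> s [us ss As cs].
case: (boolP (w \in s)) => ws; last first.
  exfalso; apply: HF.1; exists s; split => //.
  apply/allP => x xs; move/allP: As => /(_ x xs).
  by rewrite !inE => /orP[/eqP ex|//]; rewrite -ex xs in ws.
case/splitPr: ws us ss As cs => s1 s2 us ss As cs.
have cq : cycle e (w :: (s2 ++ s1)) by rewrite -(rot_cycle (size s1)) rot_size_cat in cs.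
have uq : uniq (w :: (s2 ++ s1)).
  by rewrite -(rot_uniq (size s1)) rot_size_cat in us.
have sq : 2 <= size (s2 ++ s1) by rewrite size_cat addnC; rewrite size_cat /= addnS in ss.
have Aq : all (fun y => y \in F) (s2 ++ s1).
  apply/allP => x xq; have xs : x \in s1 ++ w :: s2.
    by rewrite mem_cat inE; rewrite mem_cat in xq; case/orP: xq => ->; rewrite ?orbT.
  move/allP: As => /(_ x xs); rewrite !inE => /orP[/eqP ex|//].
  by move: uq; rewrite /= -ex xq.
move: cq uq sq Aq; case: (s2 ++ s1) => [//|a q].
case: q => [//|c q] /=.
move=> /and3P[ewa eac]; rewrite rcons_path => /andP[pcq eb] /and4P[_ aq _ _] _ /and3P[aF cF Aq].
set b := last c q in eb *.
have ab : a != b.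
  by apply/negP => /eqP ab; move: aq; rewrite /b ab mem_last.
exists (Defs.comp e F a); first by apply/imsetP; exists a.
apply/existsP; exists w; rewrite wF eqxx /=.
rewrite (_ : Defs.comp e F a \in trees e F) /=; last by apply/imsetP; exists a.
have bF : b \in F.
  by move: (mem_last c q); rewrite -/b in_cons => /orP[/eqP->|bq] //; move/allP: Aq => /(_ b bq).
have cab : connect (erestr e F) a b.
  apply/connectP; exists (c :: q) => //; first by
  apply: path_restr => //=; rewrite ?cF ?Aq //= eac.
have -> : 2 = #|[set a; b]| by rewrite cards2 ab.
apply: subset_leq_card; apply/subsetP => x.
rewrite !inE => /orP[]/eqP->; rewrite ?aF ?bF ?connect0 ?cab ?ewa //=.
by rewrite e_sym.
Qed.

Lemma ut_edge_tree (T : finType) (e : rel T) F k P Q :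
  ut_edge e F k P Q -> Q \in trees e F.
Proof. by case/existsP=> u /and4P[]. Qed.

Lemma ut_edge_mono (T : finType) (e : rel T) F k P Q :
  ut_edge e F k.+1 P Q -> ut_edge e F k P Q.
Proof.
case/existsP=> u /and4P[a b c d]; apply/existsP; exists u.
by rewrite a b c (leq_trans _ d).
Qed.

Lemma swap (T : finType) (e : rel T)
  (e_sym : symmetric e) (F : {set T}) (HF : max_induced_forest e F)
  (B : {set {set T} * {set T}}) (r : {set T})
  (HB : skeleton e F B r)
  (Bmax : forall (B' : {set {set T} * {set T}}) (r' : {set T}),
            skeleton e F B' r' -> num_two_edges e F B' <= num_two_edges e F B)
  Y X :
  Y \in nontree F -> deg_in B (HV e F) Y = 1 -> (Y, X) \in B ->
  X \notin trees e F -> False.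
Proof.
move=> Ynt degY YXB Xnt.
have YnT := nontree_not_tree e Ynt.
have [w wF Yw] : exists2 w, w \notin F & Y = [set w].
  by case/imsetP: Ynt => w; rewrite inE => ? ->; exists w.
have [Tt TtT Yt] := two_nb e_sym HF wF.
rewrite -Yw in Yt.
case: HB => [rT harc hout hroot hconn].
have key : forall a, a \in B -> (a.1 == Y) || (a.2 == Y) -> a = (Y, X).
  move=> a aB aY.
  have [/= YH XH _] := harc _ YXB.
  move/eqP: degY; case/cards1P => a0 D.
  have : (Y, X) \in [set a in B | [&& (a.1 == Y) || (a.2 == Y), a.1 \in HV e F & a.2 \in HV e F]].
    by rewrite inE YXB /= eqxx YH XH.
  rewrite D inE => /eqP E.
  have [a1H a2H _] := harc _ aB.
  have : a \in [set a in B | [&& (a.1 == Y) || (a.2 == Y), a.1 \in HV e F & a.2 \in HV e F]].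
    by rewrite inE aB aY a1H a2H.
  by rewrite D inE E => /eqP.
have TtH : Tt \in HV e F by rewrite inE TtT.
have YH : Y \in HV e F by rewrite inE Ynt orbT.
set B' := (Y, Tt) |: (B :\ (Y, X)).
have inB' : forall a, (a \in B') = (a == (Y, Tt)) || ((a != (Y, X)) && (a \in B)).
  by move=> a; rewrite !inE.
have same : forall Z, Z != Y -> [set a in B' | a.1 == Z] = [set a in B | a.1 == Z].
  move=> Z ZY; apply/setP => -[a1 a2]; rewrite !inE /=.
  case: (eqVneq a1 Z) => [->|]; last by rewrite !andbF.
  by rewrite !andbT !xpair_eqE (negbTE ZY).
have sameY : [set a in B' | a.1 == Y] = [set (Y, Tt)].
  apply/setP => a; rewrite !inE; apply/idP/idP; last by move/eqP->; rewrite /= !eqxx.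
  case/andP => /orP[//|/andP[aYX aB]] aY.
  by rewrite (key a aB) ?aY // eqxx in aYX.
have noin : forall Z Q, (Z, Q) \in B -> Z != Y -> Q != Y.
  move=> Z Q ZQ ZY; apply/negP => /eqP QY.
  have := key _ ZQ; rewrite /= QY eqxx orbT => /(_ isT) [] ZY'.
  by rewrite ZY' eqxx in ZY.
have TtY : Tt != Y by apply/negP => /eqP E; rewrite -E TtT in YnT.
have conn' : forall p Z, Z != Y -> path [rel P Q | (P, Q) \in B] Z p -> r = last Z p ->
    connect [rel P Q | (P, Q) \in B'] Z r.
  elim=> [|Q p IH] Z ZY /=; first by move=> _ ->; exact: connect0.
  case/andP => ZQ pp rl.
  apply: (connect_trans (y := Q)); last exact: IH (noin _ _ ZQ ZY) pp rl.
  apply: connect1; rewrite /= inB' ZQ andbT.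
  by apply/orP; right; apply/negP => /eqP [] ZY'; rewrite ZY' eqxx in ZY.
have sk : skeleton e F B' r.
  split => //.
  - move=> a; rewrite inB' => /orP[/eqP-> /=|/andP[_ aB]]; last exact: harc.
    by rewrite YH TtH /Hadj (ut_edge_mono Yt) orbT.
  - move=> Z ZH Zr; case: (eqVneq Z Y) => [->|ZY]; first by rewrite sameY cards1.
    by rewrite same //; exact: hout.
  - have rY : r != Y by apply/negP => /eqP E; rewrite -E rT in YnT.
    by rewrite same //.
  - have connT : connect [rel P Q | (P, Q) \in B'] Tt r.
      by case/connectP: (hconn _ TtH) => p pp rl; exact: conn' pp rl.
    move=> Z ZH; case: (eqVneq Z Y) => [->|ZY].
      apply: connect_trans connT; apply: connect1; by rewrite /= inB' eqxx.
    by case/connectP: (hconn _ ZH) => p pp rl; exact: conn' pp rl.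
have := Bmax _ _ sk.
rewrite /num_two_edges.
have -> : [set a in B' | two_edge e F a.1 a.2] =
          (Y, Tt) |: [set a in B | two_edge e F a.1 a.2].
  apply/setP => a; rewrite !inE; apply/idP/idP.
    case/andP => /orP[->//|/andP[_ aB] ->]; by rewrite aB orbT.
  case/orP => [/eqP-> /=|/andP[aB te]]; first by rewrite eqxx /two_edge Yt.
  rewrite aB te !andbT orbC; apply/orP; left; apply/negP => /eqP E.
  move: te; rewrite E /two_edge; apply/negP; rewrite negb_or.
  apply/andP; split; apply/negP => /ut_edge_tree; by [rewrite (negbTE Xnt) | rewrite (negbTE YnT)].
rewrite cardsU1 inE.
have -> : (Y, Tt) \in B = false.
  apply/negP => YtB; have := key _ YtB; rewrite /= eqxx => /(_ isT) [] E.
  by rewrite -E TtT in Xnt.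
by rewrite /= ltnn.
Qed.

Unset Implicit Arguments.
Theorem corollary3 (T : finType) (e : rel T)
  (e_sym : symmetric e) (e_irr : irreflexive e)
  (Gconn : graph_connected e)
  (F : {set T}) (HF : max_induced_forest e F)
  (B : {set {set T} * {set T}}) (r : {set T})
  (HB : skeleton e F B r)
  (Bmax : forall (B' : {set {set T} * {set T}}) (r' : {set T}),
            skeleton e F B' r' -> num_two_edges e F B' <= num_two_edges e F B) :
  forall X : {set T}, X \in HV e F :\: LS e F B ->
    deg_in B (HV e F :\: LS e F B) X = 1 -> X \in trees e F.
Proof.
move=> X XW degX.
case: (boolP (X \in trees e F)) => // Xnt; exfalso.
have HB0 := HB.
case: HB0 => [rT harc hout hroot hconn].
set W := HV e F :\: LS e F B in XW degX.
have XH : X \in HV e F by move: XW; rewrite inE => /andP[].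
have XLS : X \notin LS e F B by move: XW; rewrite inE => /andP[].
have Xn : X \in nontree F by move: XH; rewrite inE (negbTE Xnt).
have degH : deg_in B (HV e F) X != 1 by move: XLS; rewrite inE Xn.
have Xr : X != r by apply/negP => /eqP E; rewrite E rT in Xnt.
have [a0 Da0] : exists a0, [set a in B | a.1 == X] = [set a0].
  by apply/cards1P/eqP; exact: hout.
have : a0 \in [set a in B | a.1 == X] by rewrite Da0 set11.
rewrite inE => /andP[a0B /eqP a0X].
have [a01 a02 _] := harc _ a0B.
set DH := [set a in B | [&& (a.1 == X) || (a.2 == X), a.1 \in HV e F & a.2 \in HV e F]].
set DW := [set a in B | [&& (a.1 == X) || (a.2 == X), a.1 \in W & a.2 \in W]].
have nsub : ~~ (DH \subset DW).
  apply/negP => sub; move/subset_leq_card: sub; rewrite [#|DW|]degX => le1.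
  have : 0 < #|DH| by apply/card_gt0P; exists a0; rewrite inE a0B a01 a02 a0X eqxx.
  move=> gt0; move: degH; rewrite /deg_in -/DH.
  by have -> : #|DH| = 1 by apply/anti_leq; rewrite le1 gt0.
case/subsetPn: nsub => -[a1 a2] H1 H2.
move: H1; rewrite inE /= => /and4P[aB aX a1H a2H].
move: H2; rewrite inE /= aB aX /=.
have WE : forall Z, Z \in HV e F -> (Z \in W) = (Z \notin LS e F B).
  by move=> Z ZH; rewrite inE ZH andbT.
case/orP: aX => /eqP aX.
- move: aB a1H a2H; rewrite aX => aB a1H a2H.
  rewrite (WE _ a2H) XW /= => a2LS.
  rewrite negbK in a2LS.
  move: (a2LS); rewrite inE => /andP[a2n /eqP dega2].
  have a2r : a2 != r by apply/negP => /eqP E; rewrite E in a2n; rewrite (negbTE (nontree_not_tree e a2n)) in rT.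
  have [b0 Db0] : exists b0, [set a in B | a.1 == a2] = [set b0].
    by apply/cards1P/eqP; exact: hout.
  have : b0 \in [set a in B | a.1 == a2] by rewrite Db0 set11.
  rewrite inE => /andP[b0B /eqP b0a2].
  have [b01 b02 _] := harc _ b0B.
  have Xa2 : (X, a2) != b0.
    apply/negP => /eqP E; rewrite -E /= in b0a2.
    by rewrite b0a2 a2LS in XLS.
  move: dega2; rewrite /deg_in => d1.
  have : 2 <= 1.
    rewrite -{2}d1; have -> : 2 = #|[set (X, a2); b0]| by rewrite cards2 Xa2.
    apply: subset_leq_card; apply/subsetP => z; rewrite in_set2 => /orP[]/eqP->; rewrite inE /=.
    by rewrite aB /= eqxx orbT a2H XH.
    by rewrite b0B b01 b02 b0a2 eqxx.
  by [].
- move: aB a1H a2H; rewrite aX => aB a1H a2H.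
  rewrite (WE _ a1H) XW /= andbT => a1LS.
  rewrite negbK in a1LS.
  move: a1LS; rewrite inE => /andP[a1n /eqP dega1].
  exact: (swap e_sym HF HB Bmax a1n dega1 aB Xnt).
Qed.
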